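(* In the errorless symmetric relay network described in the context, for every horizon $T\ge1$ the greedy sampling policy $G$ minimizes the average sum AoI at the relay, i.e. $G\in\arg\min_{\pi}\frac{1}{TK}\sum_{t=1}^T\sum_{k=1}^K g_k^{\pi}(t)$; equivalently, $G\in\arg\max_{\pi}\sum_{t=1}^T\sum_{\tau=1}^{t-1}R(\mathcal{S}^{\pi}(\tau))$.
   Context: Fix integers $K\ge 2$ and $S,U$ with $1\le S<K$, $1\le U<K$, and $S=U$. There are $K$ processes indexed by $k\in\{1,\dots,K\}$ and time slots $t=1,2,\dots$. The state at time $t$ consists of relay AoI values $g_k(t)$ and destination AoI values $h_k(t)$, with $g_k(1)=h_k(1)=1$ for all $k$. A policy $\pi$ is a map assigning to the current state a pair $(\mathcal{S}^{\pi}(t),\mathcal{U}^{\pi}(t))$ of subsets of $\{1,\dots,K\}$ with $|\mathcal{S}^{\pi}(t)|=S$ and $|\mathcal{U}^{\pi}(t)|=U$. Errorless dynamics: $g_k(t+1)=1$ if $k\in\mathcal{S}(t)$, else $g_k(t+1)=g_k(t)+1$; $h_k(t+1)=g_k(t)+1$ if $k\in\mathcal{U}(t)$, else $h_k(t+1)=h_k(t)+1$. Write $g_k^\pi(t)$ for the relay AoI under $\pi$ and $R(\mathcal{S}^{\pi}(\tau))=\sum_{k\in\mathcal{S}^{\pi}(\tau)} g_k^{\pi}(\tau)$. The greedy policy $G$ chooses at each time $t$ a set $\mathcal{S}^G(t)$ of $S$ indices with the largest values $g_k(t)$ (maximizing $\sum_{k\in\mathcal{S}}g_k(t)$ over $|\mathcal{S}|=S$)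 and a set $\mathcal{U}^G(t)$ of $U$ indices maximizing $\sum_{k\in\mathcal{U}}(h_k(t)-g_k(t))$. *)

(* Defs.v *)
From mathcomp Require Import all_boot all_order all_algebra.
Set Implicit Arguments. Unset Strict Implicit. Unset Printing Implicit Defensive.

(* State at time t: (relay AoI g, destination AoI h), indexed by 'I_K
   (process k in {1..K} is represented by ordinal k-1). *)
Definition state (K : nat) : Type :=
  ({ffun 'I_K -> nat} * {ffun 'I_K -> nat})%type.

(* A policy maps the current state to (sampling set S(t), update set U(t)). *)
Definition policy (K : nat) : Type := state K -> ({set 'I_K} * {set 'I_K})%type.

Definition valid_policy (K S U : nat) (pi : policy K) : Prop :=
  forall st : state K, #|(pi st).1| = S /\ #|(pi st).2| = U.

Definition init_state (K : nat) : state K := ([ffun=> 1%N], [ffun=> 1%N]).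

Definition step (K : nat) (pi : policy K) (st : state K) : state K :=
  let g := st.1 in let h := st.2 in
  ([ffun k => if k \in (pi st).1 then 1%N else (g k).+1],
   [ffun k => if k \in (pi st).2 then (g k).+1 else (h k).+1]).

(* traj pi n = state at time slot t = n+1. *)
Fixpoint traj (K : nat) (pi : policy K) (n : nat) : state K :=
  match n with
  | 0 => init_state K
  | n'.+1 => step pi (traj pi n')
  end.

Definition relayAoI (K : nat) (pi : policy K) (t : nat) (k : 'I_K) : nat :=
  (traj pi t.-1).1 k.

Definition total_relay_AoI (K : nat) (pi : policy K) (T : nat) : nat :=
  \sum_(1 <= t < T.+1) \sum_(k < K) relayAoI pi t k.

(* Greedy policy (any tie-breaking): S^G(t) maximizes sum_{k in S} g_k(t)
   over |S| = S, and U^G(t) maximizes sum_{k in U} (h_k(t) - g_k(t))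
   (integer difference) over |U| = U. *)
Definition greedy_policy (K S U : nat) (G : policy K) : Prop :=
  valid_policy S U G /\
  forall st : state K,
    (forall A : {set 'I_K}, #|A| = S ->
       (\sum_(k in A) st.1 k <= \sum_(k in (G st).1) st.1 k)%N) /\
    (forall B : {set 'I_K}, #|B| = U ->
       (\sum_(k in B) ((st.2 k)%:Z - (st.1 k)%:Z)
        <= \sum_(k in (G st).2) ((st.2 k)%:Z - (st.1 k)%:Z))%R).

(* Main.v *)
Require Import Defs.
From mathcomp Require Import all_boot all_order all_algebra.
From mathcomp Require Import zify.
Set Implicit Arguments. Unset Strict Implicit. Unset Printing Implicit Defensive.

Lemma sum_lt_min x N : \sum_(v < N) (v < x : nat) = minn x N.
Proof.
elim: N => [|N IH]; first by rewrite big_ord0 minn0.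
rewrite big_ord_recr /= IH.
case: (ltnP N x) => H; rewrite ?H.
  lia.
lia.
Qed.

Lemma sum_layers K (g : {ffun 'I_K -> nat}) N :
  (forall k, g k <= N) ->
  \sum_(k < K) g k = \sum_(v < N) (K - #|[set k | g k <= v]|).
Proof.
move=> Hg.
transitivity (\sum_(k < K) \sum_(v < N) (v < g k : nat)).
  apply: eq_bigr => k _; rewrite sum_lt_min; move: (Hg k); lia.
rewrite exchange_big; apply: eq_bigr => v _.
have HC := cardsC [set k | g k <= v].
rewrite card_ord in HC.
have -> : \sum_(k < K) (v < g k : nat) = #|~: [set k | g k <= v]|.
  rewrite -sum1_card [RHS]big_mkcond /=; apply: eq_bigr => k _.
  by rewrite !inE -ltnNge; case: (v < g k).
lia.
Qed.

Definition upd K (X : {set 'I_K}) (g : {ffun 'I_K -> nat}) : {ffun 'I_K -> nat} :=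
  [ffun k => if k \in X then 1 else (g k).+1].

Lemma upd_card K (X : {set 'I_K}) g w :
  #|[set k | upd X g k <= w.+1]| = #|X| + #|[set k | g k <= w] :\: X|.
Proof.
rewrite -(cardsID X [set k | upd X g k <= w.+1]).
have -> : [set k | upd X g k <= w.+1] :&: X = X.
  by apply/setP => k; rewrite !inE ffunE; case: (k \in X); rewrite ?andbF ?andbT.
have -> : [set k | upd X g k <= w.+1] :\: X = [set k | g k <= w] :\: X.
  by apply/setP => k; rewrite !inE ffunE; case: (k \in X); rewrite ?andbF ?andbT.
by [].
Qed.

Lemma upd_card0 K (X : {set 'I_K}) g :
  #|[set k | upd X g k <= 0]| = 0.
Proof.
apply/eqP; rewrite cards_eq0; apply/eqP/setP => k; rewrite !inE ffunE.
by case: (k \in X).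
Qed.

Lemma valid_step K S (X : {set 'I_K}) (g : {ffun 'I_K -> nat}) n :
  #|X| = S ->
  (forall k, g k <= n.+1) ->
  (forall v, v <= n -> #|[set k | g k <= v]| <= S * v) ->
  (forall k, upd X g k <= n.+2) /\
  (forall v, v <= n.+1 -> #|[set k | upd X g k <= v]| <= S * v).
Proof.
move=> HX Hb Hc; split.
  by move=> k; rewrite ffunE; case: (k \in X) => //; apply: Hb.
case=> [|w] Hw; first by rewrite upd_card0.
rewrite upd_card HX.
have := Hc w Hw.
have := subset_leq_card (subsetDl [set k | g k <= w] X).
lia.
Qed.

Lemma greedy_exchange K S (X : {set 'I_K}) (g : {ffun 'I_K -> nat}) :
  #|X| = S ->
  (forall A : {set 'I_K}, #|A| = S -> \sum_(k in A) g k <= \sum_(k in X) g k) ->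
  forall k j, k \in X -> j \notin X -> g j <= g k.
Proof.
move=> HX Hmax k j kX jX.
set A := j |: (X :\ k).
have jA : j \notin X :\ k by rewrite !inE (negbTE jX) andbF.
have HA : #|A| = S.
  by rewrite cardsU1 jA -HX (cardsD1 k X) kX.
have := Hmax A HA.
rewrite /A (big_setU1 _ jA) /= (big_setD1 _ kX) /=.
lia.
Qed.

Lemma arith1 S w K b c d : b = minn (S*w) K -> S + c = K -> b <= c -> d = b ->
  S + d = minn (S+S*w) K.
Proof. lia. Qed.

Lemma arith2 S w K b c a : b = minn (S*w) K -> S + c = K -> a + c = b -> 0 < a ->
  S + c = minn (S+S*w) K.
Proof. lia. Qed.

Lemma greedy_step K S (X : {set 'I_K}) (g : {ffun 'I_K -> nat}) n :
  #|X| = S ->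
  (forall k j, k \in X -> j \notin X -> g j <= g k) ->
  (forall k, g k <= n.+1) ->
  (forall v, v <= n -> #|[set k | g k <= v]| = minn (S * v) K) ->
  (forall k, upd X g k <= n.+2) /\
  (forall v, v <= n.+1 -> #|[set k | upd X g k <= v]| = minn (S * v) K).
Proof.
move=> HX Hex Hb Hc; split.
  by move=> k; rewrite ffunE; case: (k \in X) => //; apply: Hb.
case=> [|w] Hw; first by rewrite upd_card0 muln0 min0n.
rewrite upd_card HX mulnS.
set B := [set k | g k <= w].
have HBw := Hc w Hw; rewrite -/B in HBw.
have HXC := cardsC X; rewrite card_ord in HXC.
have HBD := cardsID X B.
case: (set_0Vmem (B :&: X)) => [E|[k kBX]].
  rewrite E cards0 in HBD.
  have : B \subset ~: X.
    apply/subsetP => x xB; rewrite inE; apply/negP => xX.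
    have : x \in B :&: X by rewrite inE xB xX.
    by rewrite E inE.
  move/subset_leq_card => Hle.
  rewrite add0n in HBD.
  rewrite HX in HXC.
  exact: (arith1 HBw HXC Hle HBD).
have HBX : B :\: X = ~: X.
  apply/setP => j; rewrite !inE; case jX: (j \in X) => //=.
  move: kBX; rewrite !inE => /andP [kB kX].
  by apply: leq_trans (Hex k j kX (negbT jX)) kB.
rewrite HBX in HBD *.
have Hp : 0 < #|B :&: X| by apply/card_gt0P; exists k.
rewrite HX in HXC.
exact: (arith2 HBw HXC HBD Hp).
Qed.

Lemma traj_step K (pi : policy K) n :
  (traj pi n.+1).1 = upd (pi (traj pi n)).1 (traj pi n).1.
Proof. by []. Qed.

Lemma valid_inv K S U (pi : policy K) : valid_policy S U pi ->
  forall n, (forall k, (traj pi n).1 k <= n.+1) /\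
  (forall v, v <= n -> #|[set k | (traj pi n).1 k <= v]| <= S * v).
Proof.
move=> Hv; elim=> [|n [IH1 IH2]].
  split; first by move=> k; rewrite /= ffunE.
  move=> v; rewrite leqn0 => /eqP ->; rewrite muln0 leqn0 cards_eq0.
  by apply/eqP/setP => k; rewrite !inE /= ffunE.
rewrite traj_step; apply: valid_step => //.
by case: (Hv (traj pi n)).
Qed.

Lemma greedy_inv K S U (G : policy K) : greedy_policy S U G ->
  forall n, (forall k, (traj G n).1 k <= n.+1) /\
  (forall v, v <= n -> #|[set k | (traj G n).1 k <= v]| = minn (S * v) K).
Proof.
move=> [Hv Hm]; elim=> [|n [IH1 IH2]].
  split; first by move=> k; rewrite /= ffunE.
  move=> v; rewrite leqn0 => /eqP ->; rewrite muln0 min0n.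
  apply/eqP; rewrite cards_eq0.
  by apply/eqP/setP => k; rewrite !inE /= ffunE.
rewrite traj_step.
have HX := (Hv (traj G n)).1.
apply: greedy_step => //.
exact: (greedy_exchange HX (Hm (traj G n)).1).
Qed.

Theorem proposition2 (K S U : nat) (G : policy K) (T : nat) :
  (2 <= K)%N -> (1 <= S < K)%N -> (1 <= U < K)%N -> S = U ->
  greedy_policy S U G -> (1 <= T)%N ->
  forall pi : policy K, valid_policy S U pi ->
    (total_relay_AoI G T <= total_relay_AoI pi T)%N.
Proof.
move=> _ _ _ _ HG _ pi Hpi.
rewrite /total_relay_AoI; apply: leq_sum => t _.
rewrite /relayAoI.
set n := t.-1.
have [G1 G2] := greedy_inv HG n.
have [P1 P2] := valid_inv Hpi n.
rewrite (sum_layers G1) (sum_layers P1).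
apply: leq_sum => v _.
have Hv : v <= n by case: v => /= v; rewrite ltnS.
apply: leq_sub2l; rewrite (G2 v Hv).
have := P2 v Hv.
have := subset_leq_card (subsetT [set k | (traj pi n).1 k <= v]).
rewrite cardsT card_ord; lia.
Qed.
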